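(* Fix integers $M>N\geq1$, positive reals $P_1,P_2,P_r,d_{d1},d_{d2},d_{r1},d_{r2},d_{dr},\alpha$, and weights $\mu_1\in[0,1]$, $\mu_2=1-\mu_1$. With $\mathcal C(x)=\log(1+x)$ define, for $Q_1,Q_2>0$, $I_1=\mathcal{C}\big(\tfrac{P_1(M-N)}{d_{d1}^{\alpha}}+\tfrac{P_1}{(d_{r1}^{\alpha}/N)+Q_1}\big)$, $I_2=\mathcal{C}\big(\tfrac{P_1(M-N)}{d_{d1}^{\alpha}}\big)+\zeta$, $I_3=\mathcal{C}\big(\tfrac{P_2(M-N)}{d_{d2}^{\alpha}}+\tfrac{P_2}{(d_{r2}^{\alpha}/N)+Q_2}\big)$, $I_4=\mathcal{C}\big(\tfrac{P_2(M-N)}{d_{d2}^{\alpha}}\big)+\zeta$, $I_5=\mathcal{C}\big(\tfrac{P_1(M-N)}{d_{d1}^{\alpha}}\big)+\mathcal{C}\big(\tfrac{P_2(M-N)}{d_{d2}^{\alpha}}\big)+\zeta$, where $\zeta=N\mathcal{C}\big(\tfrac{P_r(M-N)}{Nd_{dr}^{\alpha}}\big)-\mathcal{C}\big(\tfrac{d_{r1}^{\alpha}}{NQ_1}\big)-\mathcal{C}\big(\tfrac{d_{r2}^{\alpha}}{NQ_2}\big)$. Consider the problem $$\max_{R_1,R_2,Q_1,Q_2}\ \mu_1R_1+\mu_2R_2\quad\text{s.t. } R_1\le\min\{I_1,I_2\},\ R_2\le\min\{I_3,I_4\},\ R_1+R_2\le I_5,\ Q_1\ge0,\ Q_2\ge0.$$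 Let $a_k=1+\frac{P_k(M-N)}{d_{dk}^{\alpha}}$, $\lambda_s=\big(1+\frac{P_r(M-N)}{Nd_{dr}^{\alpha}}\big)^N$, $A=\mu_2P_2(d_{r1}^{\alpha}/N)a_1$, $B=(\mu_1-\mu_2)P_1P_2$, $C=-\mu_1P_1(d_{r2}^{\alpha}/N)a_2\lambda_s$, $\lambda_o=(2A)^{-1}(B+\sqrt{B^2-4AC})$, $\lambda_1^*=\min\{\max\{\lambda_o,1\},\lambda_s\}$ (i.e. $\lambda_1^*=1$ if $\lambda_o<1$ and $\lambda_1^*=\lambda_s$ if $\lambda_o>\lambda_s$), and $\lambda_2^*=\lambda_s/\lambda_1^*$. Then optimal quantization noise variances for this problem are $$Q_k^*=\frac{(d_{rk}^{\alpha}/N)\,a_k+P_k}{a_k(\lambda_k^*-1)},\qquad k\in\{1,2\}.$$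
   Context: When $\lambda_k^*=1$ the formula gives $Q_k^*=+\infty$, meaning that the data stream of user $k$ is not quantized/forwarded; in that case the expressions involving $Q_k$ are understood as their limits as $Q_k\to\infty$ (i.e. $\frac{P_k}{(d_{rk}^\alpha/N)+Q_k}\to0$ and $\mathcal C(\frac{d_{rk}^\alpha}{NQ_k})\to0$), and optimality is in the sense of the supremum of the problem. These quantities arise as the achievable rate region of quantize-forward relaying with joint decoding in a massive MIMO heterogeneous network with two users, relay (small-cell base station, $N$ antennas) and destination (macro-cell base station, $M$ antennas). *)

(* Defs.v *)
From Stdlib Require Import Reals Lra.
Open Scope R_scope.

Record sysp := Sysp {
  sM : nat; sN : nat;
  P1 : R; P2 : R; Pr : R;
  dd1 : R; dd2 : R; dr1 : R; dr2 : R; ddr : R;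
  alpha : R;
  mu1 : R }.

Definition mu2 (s : sysp) : R := 1 - mu1 s.

(* C(x) = log(1+x) (natural log; the base only rescales all rates). *)
Definition Ccap (x : R) : R := ln (1 + x).

Definition pw (s : sysp) (d : R) : R := Rpower d (alpha s).

Definition Nr (s : sysp) : R := INR (sN s).
Definition MN (s : sysp) : R := INR (sM s) - INR (sN s).

(* Quantization noise variances are extended positive reals:
   Some q = finite q, None = +infinity (stream not forwarded).  The
   expressions involving Q are their limits as Q -> +infinity in that case. *)
Definition relterm (s : sysp) (P d : R) (Q : option R) : R :=
  match Q with Some q => P / (pw s d / Nr s + q) | None => 0 end.

Definition qpen (s : sysp) (d : R) (Q : option R) : R :=
  match Q with Some q => Ccap (pw s d / (Nr s * q)) | None => 0 end.

Definition zeta (s : sysp) (Q1 Q2 : option R) : R :=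
  Nr s * Ccap (Pr s * MN s / (Nr s * pw s (ddr s)))
  - qpen s (dr1 s) Q1 - qpen s (dr2 s) Q2.

Definition I1 s Q1 (Q2 : option R) :=
  Ccap (P1 s * MN s / pw s (dd1 s) + relterm s (P1 s) (dr1 s) Q1).
Definition I2 s Q1 Q2 := Ccap (P1 s * MN s / pw s (dd1 s)) + zeta s Q1 Q2.
Definition I3 s (Q1 : option R) Q2 :=
  Ccap (P2 s * MN s / pw s (dd2 s) + relterm s (P2 s) (dr2 s) Q2).
Definition I4 s Q1 Q2 := Ccap (P2 s * MN s / pw s (dd2 s)) + zeta s Q1 Q2.
Definition I5 s Q1 Q2 :=
  Ccap (P1 s * MN s / pw s (dd1 s)) + Ccap (P2 s * MN s / pw s (dd2 s))
  + zeta s Q1 Q2.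

Definition feasible (s : sysp) (R1 R2 : R) (Q1 Q2 : option R) : Prop :=
  R1 <= Rmin (I1 s Q1 Q2) (I2 s Q1 Q2) /\
  R2 <= Rmin (I3 s Q1 Q2) (I4 s Q1 Q2) /\
  R1 + R2 <= I5 s Q1 Q2.

Definition objective (s : sysp) (R1 R2 : R) : R := mu1 s * R1 + mu2 s * R2.

Definition a1 s := 1 + P1 s * MN s / pw s (dd1 s).
Definition a2 s := 1 + P2 s * MN s / pw s (dd2 s).
Definition lam_s s := (1 + Pr s * MN s / (Nr s * pw s (ddr s))) ^ sN s.
Definition cA s := mu2 s * P2 s * (pw s (dr1 s) / Nr s) * a1 s.
Definition cB s := (mu1 s - mu2 s) * P1 s * P2 s.
Definition cC s := - mu1 s * P1 s * (pw s (dr2 s) / Nr s) * a2 s * lam_s s.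
Definition lam_o s := / (2 * cA s) * (cB s + sqrt (cB s ^ 2 - 4 * cA s * cC s)).

(* lambda_1^* = min{max{lambda_o,1},lambda_s}.  When A = 0 (i.e. mu1 = 1)
   lambda_o = (B + |B|)/(2A) with B > 0 is +infinity, so lambda_1^* = lambda_s. *)
Definition lam1star s :=
  if Req_EM_T (cA s) 0 then lam_s s else Rmin (Rmax (lam_o s) 1) (lam_s s).
Definition lam2star s := lam_s s / lam1star s.

Definition Qstar_gen s (d a P lam : R) : option R :=
  if Req_EM_T lam 1 then None
  else Some ((pw s d / Nr s * a + P) / (a * (lam - 1))).

Definition Q1star s := Qstar_gen s (dr1 s) (a1 s) (P1 s) (lam1star s).
Definition Q2star s := Qstar_gen s (dr2 s) (a2 s) (P2 s) (lam2star s).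

(* Main.v *)
Require Import Defs.
From Stdlib Require Import Reals Lra Psatz.
From Coquelicot Require Import Coquelicot.
Open Scope R_scope.

Lemma ln_le' x y : 0 < x -> x <= y -> ln x <= ln y.
Proof. intros Hx [H|H]. left; apply ln_increasing; auto. subst; lra. Qed.

Lemma ln_div' x y : 0 < x -> 0 < y -> ln (x / y) = ln x - ln y.
Proof. intros. unfold Rdiv. rewrite ln_mult, ln_Rinv; try lra. apply Rinv_0_lt_compat; auto. Qed.

Lemma exp_le' x y : x <= y -> exp x <= exp y.
Proof. intros [H|H]. left; apply exp_increasing; auto. subst; lra. Qed.

Lemma ln_ge0 x : 1 <= x -> 0 <= ln x.
Proof. intros. rewrite <- ln_1. apply ln_le'; lra. Qed.

Definition uf (a b l : R) := (a*l+b)/(a+b).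
Definition Ff (a b l : R) := ln a + ln l - ln (uf a b l).
Definition Phi m a1 b1 a2 b2 ls l := m * Ff a1 b1 l + (1-m) * Ff a2 b2 (ls/l).
Definition dPhi m a1 b1 a2 b2 ls c := m*b1/(c*(a1*c+b1)) - (1-m)*b2/(a2*ls+b2*c).

Lemma uf_pos a b l : 0 < a -> 0 < b -> 0 < l -> 0 < uf a b l.
Proof. intros. unfold uf. apply Rdiv_lt_0_compat; nra. Qed.

Lemma uf_ge1 a b l : 0 < a -> 0 < b -> 1 <= l -> 1 <= uf a b l.
Proof. intros. unfold uf. apply Rmult_le_reg_r with (a+b); [lra|].
  field_simplify; try lra. nra. Qed.

Lemma uf_le a b l : 0 < a -> 0 < b -> 1 <= l -> uf a b l <= l.
Proof. intros. unfold uf. apply Rmult_le_reg_r with (a+b); [lra|].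
  field_simplify; try lra. nra. Qed.

Lemma uf_mono a b x y : 0 < a -> 0 < b -> x <= y -> uf a b x <= uf a b y.
Proof. intros. unfold uf. unfold Rdiv. apply Rmult_le_compat_r.
  left; apply Rinv_0_lt_compat; lra. nra. Qed.

Lemma Ff_alt a b l : 0 < a -> 0 < b -> 0 < l -> Ff a b l = ln a + ln (l / uf a b l).
Proof. intros. unfold Ff. rewrite ln_div'; try lra. apply uf_pos; auto. Qed.

Lemma Ff_mono a b x y : 0 < a -> 0 < b -> 0 < x -> x <= y -> Ff a b x <= Ff a b y.
Proof. intros. rewrite !Ff_alt; try lra. apply Rplus_le_compat_l. apply ln_le'.
  apply Rdiv_lt_0_compat; auto; apply uf_pos; auto.
  unfold uf. replace (x / ((a * x + b) / (a + b))) with ((a+b) * (x/(a*x+b))) by (field; repeat split; intro; nra).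
  replace (y / ((a * y + b) / (a + b))) with ((a+b) * (y/(a*y+b))) by (field; repeat split; intro; nra).
  apply Rmult_le_compat_l; [lra|].
  apply Rmult_le_reg_r with ((a*x+b)*(a*y+b)). apply Rmult_lt_0_compat; nra.
  field_simplify; nra. Qed.

Lemma Phi_deriv m a1 b1 a2 b2 ls l : 0 < a1 -> 0 < b1 -> 0 < a2 -> 0 < b2 -> 0 < ls -> 0 < l ->
  derivable_pt_lim (Phi m a1 b1 a2 b2 ls) l (dPhi m a1 b1 a2 b2 ls l).
Proof. intros. apply is_derive_Reals. unfold Phi, Ff, uf, dPhi.
  assert (Hl : 0 < / l) by (apply Rinv_0_lt_compat; lra).
  assert (Hs1 : 0 < / (a1+b1)) by (apply Rinv_0_lt_compat; lra).
  assert (Hs2 : 0 < / (a2+b2)) by (apply Rinv_0_lt_compat; lra).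
  assert (Hls : 0 < ls * / l) by (apply Rmult_lt_0_compat; lra).
  assert (Hq : 0 < a2 * (ls * / l) + b2) by nra.
  auto_derive.
  - repeat split; try lra; apply Rmult_lt_0_compat; nra.
  - assert (E : a2 * (ls * / l) + b2 = (a2*ls+b2*l)/l) by (field; lra).
    rewrite E in *. assert (0 < a2*ls+b2*l) by nra.
    field. repeat split; try lra; try (intro; nra).
Qed.

Definition lstar m P1 P2 D1 D2 a1 a2 ls :=
 if Req_EM_T ((1-m)*P2*D1*a1) 0 then ls else
 Rmin (Rmax (/(2*((1-m)*P2*D1*a1)) * ((m-(1-m))*P1*P2 + sqrt(((m-(1-m))*P1*P2)^2 - 4*((1-m)*P2*D1*a1)*(- m*P1*D2*a2*ls)))) 1) ls.

Definition Qf m P1 P2 D1 D2 a1 a2 ls c :=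
  - ((1-m)*P2*D1*a1) * c^2 + ((m-(1-m))*P1*P2) * c - (- m*P1*D2*a2*ls).

Lemma lstar_props m P1 P2 D1 D2 a1 a2 ls :
  0 <= m <= 1 -> 0 < P1 -> 0 < P2 -> 0 < D1 -> 0 < D2 -> 0 < a1 -> 0 < a2 -> 1 < ls ->
  let l := lstar m P1 P2 D1 D2 a1 a2 ls in
  1 <= l <= ls /\
  (forall c, 1 < c -> c < l -> 0 <= Qf m P1 P2 D1 D2 a1 a2 ls c) /\
  (forall c, l < c -> c < ls -> Qf m P1 P2 D1 D2 a1 a2 ls c <= 0).
Proof.
  intros Hm HP1 HP2 HD1 HD2 Ha1 Ha2 Hls l. unfold l, lstar, Qf.
  set (A := (1-m)*P2*D1*a1). set (B := (m-(1-m))*P1*P2). set (C := - m*P1*D2*a2*ls).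
  assert (HK : 0 < P2*D1*a1) by (apply Rmult_lt_0_compat; [apply Rmult_lt_0_compat|]; lra).
  assert (HA0 : 0 <= A) by (unfold A; replace ((1-m)*P2*D1*a1) with ((1-m)*(P2*D1*a1)) by ring; nra).
  assert (HC0 : C <= 0).
  { unfold C. assert (0 < P1*D2*a2*ls) by (repeat apply Rmult_lt_0_compat; lra).
    replace (- m * P1 * D2 * a2 * ls) with (- (m * (P1*D2*a2*ls))) by ring. nra. }
  destruct (Req_EM_T A 0) as [HA|HA].
  - assert (Hm1 : m = 1).
    { assert ((1-m)*(P2*D1*a1) = 0) by (rewrite <- HA; unfold A; ring).
      apply Rmult_integral in H. lra. }
    rewrite HA. split; [lra|]. split.
    + intros c Hc1 Hc2. unfold B, C. rewrite Hm1.
      assert (0 < P1*P2) by (apply Rmult_lt_0_compat; lra).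
      assert (0 < P1*D2*a2*ls) by (repeat apply Rmult_lt_0_compat; lra). nra.
    + intros; lra.
  - assert (HAp : 0 < A) by lra.
    set (disc := B^2 - 4*A*C).
    assert (Hd : B*B <= disc) by (unfold disc; nra).
    set (sq := sqrt disc).
    assert (Hsq0 : 0 <= sq) by apply sqrt_pos.
    assert (Hsq2 : sq*sq = disc) by (apply sqrt_sqrt; nra).
    assert (HsqB : B <= sq /\ -B <= sq) by (split; nra).
    set (lo := / (2*A) * (B + sq)).
    set (lm := / (2*A) * (B - sq)).
    assert (Hlm : lm <= 0).
    { unfold lm. assert (0 < / (2*A)) by (apply Rinv_0_lt_compat; lra). nra. }
    assert (Hfac : forall c, - A * c^2 + B*c - C = - A * (c - lo) * (c - lm)).
    { intro c. assert (EC : C = (B*B - sq*sq)/(4*A)) by (rewrite Hsq2; unfold disc; field; lra).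
      rewrite EC. unfold lo, lm. field. lra. }
    split; [unfold Rmin, Rmax; repeat destruct Rle_dec; lra|]. split.
    + intros c Hc1 Hc2. rewrite Hfac.
      assert (c < lo) by (unfold Rmin, Rmax in Hc2; repeat destruct Rle_dec; lra).
      assert (0 < c - lm) by lra.
      assert (0 < lo - c) by lra.
      replace (- A * (c - lo) * (c - lm)) with (A * ((lo - c) * (c - lm))) by ring.
      apply Rmult_le_pos; [lra|]. apply Rmult_le_pos; lra.
    + intros c Hc1 Hc2. rewrite Hfac.
      assert (lo < c /\ 1 < c) by (unfold Rmin, Rmax in Hc1; repeat destruct Rle_dec; lra).
      assert (0 < c - lm) by lra.
      assert (0 < c - lo) by lra.
      replace (- A * (c - lo) * (c - lm)) with (- (A * ((c - lo) * (c - lm)))) by ring.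
      assert (0 <= A * ((c - lo) * (c - lm))) by (apply Rmult_le_pos; [lra|]; apply Rmult_le_pos; lra).
      lra.
Qed.

Lemma dPhi_eq m P1 P2 D1 D2 a1 a2 ls c :
  0 < P1 -> 0 < P2 -> 0 < D1 -> 0 < D2 -> 0 < a1 -> 0 < a2 -> 0 < ls -> 0 < c ->
  dPhi m a1 (P1/D1) a2 (P2/D2) ls c * (D1*D2*(c*(a1*c+P1/D1)*(a2*ls+P2/D2*c)))
  = Qf m P1 P2 D1 D2 a1 a2 ls c.
Proof.
  intros. unfold dPhi, Qf.
  assert (0 < P1/D1) by (apply Rdiv_lt_0_compat; lra).
  assert (0 < P2/D2) by (apply Rdiv_lt_0_compat; lra).
  assert (0 < a1*c+P1/D1) by nra. assert (0 < a2*ls+P2/D2*c) by nra.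
  assert (0 < a2*ls*D2) by (repeat apply Rmult_lt_0_compat; lra).
  assert (0 < a1*c*D1) by (repeat apply Rmult_lt_0_compat; lra).
  assert (0 < P2*c) by (repeat apply Rmult_lt_0_compat; lra).
  field. repeat split; lra.
Qed.

Lemma Phi_opt m P1 P2 D1 D2 a1 a2 ls l :
  0 <= m <= 1 -> 0 < P1 -> 0 < P2 -> 0 < D1 -> 0 < D2 -> 0 < a1 -> 0 < a2 -> 1 < ls ->
  1 <= l <= ls ->
  Phi m a1 (P1/D1) a2 (P2/D2) ls l <= Phi m a1 (P1/D1) a2 (P2/D2) ls (lstar m P1 P2 D1 D2 a1 a2 ls).
Proof.
  intros Hm HP1 HP2 HD1 HD2 Ha1 Ha2 Hls Hl.
  destruct (lstar_props m P1 P2 D1 D2 a1 a2 ls) as [Hst [S1 S2]]; auto.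
  set (st := lstar m P1 P2 D1 D2 a1 a2 ls) in *.
  assert (0 < P1/D1) by (apply Rdiv_lt_0_compat; lra).
  assert (0 < P2/D2) by (apply Rdiv_lt_0_compat; lra).
  assert (Hden : forall c, 0 < c -> 0 < D1*D2*(c*(a1*c+P1/D1)*(a2*ls+P2/D2*c))).
  { intros c Hc. assert (0 < a1*c+P1/D1) by nra. assert (0 < a2*ls+P2/D2*c) by nra.
    repeat apply Rmult_lt_0_compat; lra. }
  destruct (Rtotal_order l st) as [Hlt|[Heq|Hgt]].
  - destruct (MVT_cor2 (Phi m a1 (P1/D1) a2 (P2/D2) ls) (dPhi m a1 (P1/D1) a2 (P2/D2) ls) l st Hlt)
      as [c [Hc1 Hc2]].
    { intros c Hc. apply Phi_deriv; lra. }
    assert (0 <= dPhi m a1 (P1/D1) a2 (P2/D2) ls c).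
    { pose proof (dPhi_eq m P1 P2 D1 D2 a1 a2 ls c) as E.
      pose proof (Hden c) as Hd. pose proof (S1 c) as Q.
      assert (0 <= Qf m P1 P2 D1 D2 a1 a2 ls c) by (apply Q; lra).
      rewrite <- E in H1 by lra. specialize (Hd ltac:(lra)). nra. }
    nra.
  - rewrite Heq; lra.
  - destruct (MVT_cor2 (Phi m a1 (P1/D1) a2 (P2/D2) ls) (dPhi m a1 (P1/D1) a2 (P2/D2) ls) st l Hgt)
      as [c [Hc1 Hc2]].
    { intros c Hc. apply Phi_deriv; lra. }
    assert (dPhi m a1 (P1/D1) a2 (P2/D2) ls c <= 0).
    { pose proof (dPhi_eq m P1 P2 D1 D2 a1 a2 ls c) as E.
      pose proof (Hden c) as Hd. pose proof (S2 c) as Q.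
      assert (Qf m P1 P2 D1 D2 a1 a2 ls c <= 0) by (apply Q; lra).
      rewrite <- E in H1 by lra. specialize (Hd ltac:(lra)). nra. }
    nra.
Qed.

Lemma comb m R1 R2 X Y : 0 <= m <= 1 -> R1 <= X -> R2 <= Y -> m*R1 + (1-m)*R2 <= m*X + (1-m)*Y.
Proof. intros. nra. Qed.

Lemma reduce m a1 b1 a2 b2 ls l1 l2 R1 R2 :
  0 <= m <= 1 -> 0 < a1 -> 0 < b1 -> 0 < a2 -> 0 < b2 -> 1 < ls -> 1 <= l1 -> 1 <= l2 ->
  R1 <= Ff a1 b1 l1 ->
  R1 <= ln a1 + ln ls - ln (uf a1 b1 l1) - ln (uf a2 b2 l2) ->
  R2 <= Ff a2 b2 l2 ->
  R2 <= ln a2 + ln ls - ln (uf a1 b1 l1) - ln (uf a2 b2 l2) ->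
  R1 + R2 <= ln a1 + ln a2 + ln ls - ln (uf a1 b1 l1) - ln (uf a2 b2 l2) ->
  exists l, 1 <= l <= ls /\ m*R1 + (1-m)*R2 <= Phi m a1 b1 a2 b2 ls l.
Proof.
  intros Hm Ha1 Hb1 Ha2 Hb2 Hls Hl1 Hl2 C1 C2 C3 C4 C5.
  pose proof (uf_ge1 a1 b1 l1 Ha1 Hb1 Hl1) as U1.
  pose proof (uf_ge1 a2 b2 l2 Ha2 Hb2 Hl2) as U2.
  pose proof (uf_le a1 b1 l1 Ha1 Hb1 Hl1) as V1.
  pose proof (uf_le a2 b2 l2 Ha2 Hb2 Hl2) as V2.
  pose proof (ln_ge0 _ U1). pose proof (ln_ge0 _ U2).
  set (u1 := uf a1 b1 l1) in *. set (u2 := uf a2 b2 l2) in *.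
  destruct (Rle_lt_dec (l1*l2) ls) as [Hc|Hc].
  - exists (ls/l2).
    assert (E1 : l1 <= ls/l2).
    { replace l1 with (l1*l2/l2) by (field; lra). unfold Rdiv.
      apply Rmult_le_compat_r; [left; apply Rinv_0_lt_compat; lra|lra]. }
    assert (E2 : ls/l2 <= ls).
    { replace ls with (ls*l2/l2) at 2 by (field; lra). unfold Rdiv.
      apply Rmult_le_compat_r; [left; apply Rinv_0_lt_compat; lra|nra]. }
    split; [lra|]. unfold Phi.
    replace (ls/(ls/l2)) with l2 by (field; lra).
    apply comb; auto.
    apply Rle_trans with (Ff a1 b1 l1); auto. apply Ff_mono; lra.
  - assert (HL : ln l1 + ln l2 > ln ls).
    { rewrite <- ln_mult by lra. apply ln_increasing; lra. }
    set (L := ln ls) in *.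
    set (p1 := R1 - ln a1 + ln u1). set (p2 := R2 - ln a2 + ln u2).
    unfold Ff in C1, C3. fold u1 in C1. fold u2 in C3.
    set (t := Rmax (Rmax p1 (L - ln l2)) 0).
    assert (T : p1 <= t /\ L - ln l2 <= t /\ 0 <= t /\ t <= ln l1 /\ t <= L - p2 /\ t <= L).
    { pose proof (ln_ge0 _ Hl1). pose proof (ln_ge0 _ Hl2).
      assert (0 <= L) by (apply ln_ge0; lra).
      unfold t, Rmax, p1, p2 in *; repeat destruct Rle_dec; lra. }
    exists (exp t).
    assert (Ee : exp L = ls) by (apply exp_ln; lra).
    assert (Ee1 : exp (ln l1) = l1) by (apply exp_ln; lra).
    assert (Ee2 : exp (ln l2) = l2) by (apply exp_ln; lra).
    assert (G1 : 1 <= exp t) by (rewrite <- exp_0; apply exp_le'; lra).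
    assert (G2 : exp t <= ls) by (rewrite <- Ee; apply exp_le'; lra).
    assert (G3 : exp t <= l1) by (rewrite <- Ee1; apply exp_le'; lra).
    assert (Eq : ls / exp t = exp (L - t)).
    { unfold Rminus. rewrite exp_plus, exp_Ropp, Ee. reflexivity. }
    assert (G4 : exp (L - t) <= l2) by (rewrite <- Ee2; apply exp_le'; lra).
    split; [lra|]. unfold Phi. rewrite Eq. apply comb; auto.
    + unfold Ff. rewrite ln_exp.
      assert (ln (uf a1 b1 (exp t)) <= ln u1).
      { apply ln_le'. apply uf_pos; auto; apply exp_pos. apply uf_mono; auto. }
      unfold p1 in T. lra.
    + unfold Ff. rewrite ln_exp.
      assert (ln (uf a2 b2 (exp (L - t))) <= ln u2).
      { apply ln_le'. apply uf_pos; auto; apply exp_pos. apply uf_mono; auto. }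
      unfold p2 in T. lra.
Qed.

Lemma Ff_ln a b l : 0 < a -> 0 < b -> 0 < l -> Ff a b l = ln (a * l / uf a b l).
Proof. intros. unfold Ff. rewrite ln_div', ln_mult; try lra. nra. apply uf_pos; auto. Qed.

Lemma Qgen_vals s d a x P l :
  0 < pw s d -> 0 < Nr s -> a = 1 + x -> 0 < a -> 0 < P -> 1 <= l ->
  Ccap (x + relterm s P d (Qstar_gen s d a P l)) = Ff a (P/(pw s d/Nr s)) l /\
  qpen s d (Qstar_gen s d a P l) = ln (uf a (P/(pw s d/Nr s)) l).
Proof.
  intros Hw Hn Ha Ha0 HP Hl.
  assert (HD : 0 < pw s d / Nr s) by (apply Rdiv_lt_0_compat; auto).
  set (D := pw s d / Nr s) in *.
  assert (Hb : 0 < P / D) by (apply Rdiv_lt_0_compat; auto).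
  unfold Qstar_gen. destruct (Req_EM_T l 1) as [E|E].
  - subst l. simpl. unfold Ccap, Ff.
    assert (uf a (P/D) 1 = 1) by (unfold uf; field; repeat split; intro; nra).
    rewrite H, ln_1. split; [|reflexivity]. rewrite Ha, Rplus_0_r. ring.
  - assert (Hl1 : 1 < l) by lra.
    assert (Hq : 0 < (D * a + P) / (a * (l - 1))).
    { apply Rdiv_lt_0_compat; nra. }
    simpl. fold D. unfold Ccap. rewrite Ff_ln; try lra; auto. split.
    + f_equal. unfold uf. fold D. replace x with (a - 1) by lra.
      assert (0 < a*l*D) by (apply Rmult_lt_0_compat; [apply Rmult_lt_0_compat|]; lra).
      assert (0 < a*D) by (apply Rmult_lt_0_compat; lra).
      field. repeat split; lra.
    + apply f_equal. unfold uf. unfold D.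
      assert (0 < a*l*pw s d) by (repeat apply Rmult_lt_0_compat; lra).
      assert (0 < a*pw s d) by (repeat apply Rmult_lt_0_compat; lra).
      assert (0 < P * Nr s) by (repeat apply Rmult_lt_0_compat; lra).
      field. repeat split; lra.
Qed.

Local Notation D1s s := (pw s (dr1 s) / Nr s).
Local Notation D2s s := (pw s (dr2 s) / Nr s).
Local Notation x1s s := (P1 s * MN s / pw s (dd1 s)).
Local Notation x2s s := (P2 s * MN s / pw s (dd2 s)).

Theorem theorem2 (s : sysp) :
  (1 <= sN s)%nat -> (sN s < sM s)%nat ->
  0 < P1 s -> 0 < P2 s -> 0 < Pr s ->
  0 < dd1 s -> 0 < dd2 s -> 0 < dr1 s -> 0 < dr2 s -> 0 < ddr s ->
  0 < alpha s ->
  0 <= mu1 s <= 1 ->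
  exists (R1s R2s : R),
    feasible s R1s R2s (Q1star s) (Q2star s) /\
    (forall (R1 R2 q1 q2 : R), 0 < q1 -> 0 < q2 ->
       feasible s R1 R2 (Some q1) (Some q2) ->
       objective s R1 R2 <= objective s R1s R2s) /\
    (forall eps : R, 0 < eps ->
       exists (R1 R2 q1 q2 : R), 0 < q1 /\ 0 < q2 /\
         feasible s R1 R2 (Some q1) (Some q2) /\
         objective s R1s R2s - eps <= objective s R1 R2).
Proof.
  intros HN HNM HP1 HP2 HPr Hdd1 Hdd2 Hdr1 Hdr2 Hddr Hal Hm.
  assert (Hn : 0 < Nr s) by (unfold Nr; apply lt_0_INR; lia).
  assert (HMN : 0 < MN s) by (unfold MN; pose proof (lt_INR _ _ HNM); lra).
  assert (Hpw : forall d, 0 < pw s d) by (intro; unfold pw, Rpower; apply exp_pos).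
  pose proof (Hpw (dr1 s)) as Hw1. pose proof (Hpw (dr2 s)) as Hw2.
  assert (HD1 : 0 < D1s s) by (apply Rdiv_lt_0_compat; auto).
  assert (HD2 : 0 < D2s s) by (apply Rdiv_lt_0_compat; auto).
  assert (Hx1 : 0 < x1s s) by (apply Rdiv_lt_0_compat; [apply Rmult_lt_0_compat|]; auto).
  assert (Hx2 : 0 < x2s s) by (apply Rdiv_lt_0_compat; [apply Rmult_lt_0_compat|]; auto).
  assert (Ha1 : 1 < a1 s) by (unfold a1; lra).
  assert (Ha2 : 1 < a2 s) by (unfold a2; lra).
  assert (Hy : 0 < Pr s * MN s / (Nr s * pw s (ddr s))).
  { apply Rdiv_lt_0_compat; apply Rmult_lt_0_compat; auto. }
  assert (Hls : 1 < lam_s s) by (unfold lam_s; apply Rlt_pow_R1; [lra|lia]).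
  assert (HL : Nr s * Ccap (Pr s * MN s / (Nr s * pw s (ddr s))) = ln (lam_s s)).
  { unfold lam_s, Ccap. rewrite ln_pow by lra. reflexivity. }
  assert (Hb1 : 0 < P1 s / D1s s) by (apply Rdiv_lt_0_compat; auto).
  assert (Hb2 : 0 < P2 s / D2s s) by (apply Rdiv_lt_0_compat; auto).
  assert (Hst : lam1star s = lstar (mu1 s) (P1 s) (P2 s) (D1s s) (D2s s) (a1 s) (a2 s) (lam_s s))
    by reflexivity.
  assert (V1 : forall l, 1 <= l ->
    Ccap (x1s s + relterm s (P1 s) (dr1 s) (Qstar_gen s (dr1 s) (a1 s) (P1 s) l)) = Ff (a1 s) (P1 s / D1s s) l /\
    qpen s (dr1 s) (Qstar_gen s (dr1 s) (a1 s) (P1 s) l) = ln (uf (a1 s) (P1 s / D1s s) l)).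
  { intros l Hl. apply Qgen_vals; auto; lra. }
  assert (V2 : forall l, 1 <= l ->
    Ccap (x2s s + relterm s (P2 s) (dr2 s) (Qstar_gen s (dr2 s) (a2 s) (P2 s) l)) = Ff (a2 s) (P2 s / D2s s) l /\
    qpen s (dr2 s) (Qstar_gen s (dr2 s) (a2 s) (P2 s) l) = ln (uf (a2 s) (P2 s / D2s s) l)).
  { intros l Hl. apply Qgen_vals; auto; lra. }
  assert (FP : forall l, 1 <= l <= lam_s s ->
    feasible s (Ff (a1 s) (P1 s / D1s s) l) (Ff (a2 s) (P2 s / D2s s) (lam_s s / l))
      (Qstar_gen s (dr1 s) (a1 s) (P1 s) l) (Qstar_gen s (dr2 s) (a2 s) (P2 s) (lam_s s / l))).
  { intros l Hl.
    assert (Hl2 : 1 <= lam_s s / l <= lam_s s).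
    { split.
      - replace 1 with (l / l) by (field; lra). unfold Rdiv.
        apply Rmult_le_compat_r; [left; apply Rinv_0_lt_compat; lra|lra].
      - replace (lam_s s) with (lam_s s * l / l) at 2 by (field; lra). unfold Rdiv.
        apply Rmult_le_compat_r; [left; apply Rinv_0_lt_compat; lra|nra]. }
    destruct (V1 l) as [E1 F1]; [lra|]. destruct (V2 (lam_s s / l)) as [E3 F3]; [lra|].
    unfold feasible, I1, I2, I3, I4, I5, zeta. rewrite E1, E3, F1, F3, HL.
    change (Ccap (x1s s)) with (ln (a1 s)). change (Ccap (x2s s)) with (ln (a2 s)).
    assert (G1 : ln (uf (a1 s) (P1 s / D1s s) l) <= ln l).
    { apply ln_le'. apply uf_pos; lra. apply uf_le; lra. }
    assert (G2 : ln (uf (a2 s) (P2 s / D2s s) (lam_s s / l)) <= ln (lam_s s / l)).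
    { apply ln_le'. apply uf_pos; lra. apply uf_le; lra. }
    assert (G3 : ln (lam_s s / l) = ln (lam_s s) - ln l) by (apply ln_div'; lra).
    unfold Ff. rewrite G3 in *.
    split; [apply Rmin_glb; lra | split; [apply Rmin_glb; lra | lra]]. }
  destruct (lstar_props (mu1 s) (P1 s) (P2 s) (D1s s) (D2s s) (a1 s) (a2 s) (lam_s s)) as [Hstb _];
    try lra.
  rewrite <- Hst in Hstb.
  exists (Ff (a1 s) (P1 s / D1s s) (lam1star s)), (Ff (a2 s) (P2 s / D2s s) (lam2star s)).
  assert (Eobj : forall R1 R2, objective s R1 R2 = mu1 s * R1 + (1 - mu1 s) * R2) by reflexivity.
  assert (Estar : mu1 s * Ff (a1 s) (P1 s / D1s s) (lam1star s) + (1 - mu1 s) * Ff (a2 s) (P2 s / D2s s) (lam2star s)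
     = Phi (mu1 s) (a1 s) (P1 s / D1s s) (a2 s) (P2 s / D2s s) (lam_s s) (lam1star s)) by reflexivity.
  split; [|split].
  - apply (FP (lam1star s) Hstb).
  - intros R1 R2 q1 q2 Hq1 Hq2 Hf.
    rewrite !Eobj, Estar.
    set (l1 := ((a1 s + P1 s / D1s s) * (1 + D1s s / q1) - P1 s / D1s s) / a1 s).
    set (l2 := ((a2 s + P2 s / D2s s) * (1 + D2s s / q2) - P2 s / D2s s) / a2 s).
    assert (Hl1 : 1 < l1).
    { assert (l1 - 1 = (a1 s + P1 s / D1s s) * (D1s s / q1) / a1 s) by (unfold l1; field; lra).
      assert (0 < (a1 s + P1 s / D1s s) * (D1s s / q1) / a1 s).
      { apply Rdiv_lt_0_compat; [apply Rmult_lt_0_compat|]; try lra. apply Rdiv_lt_0_compat; lra. }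
      lra. }
    assert (Hl2 : 1 < l2).
    { assert (l2 - 1 = (a2 s + P2 s / D2s s) * (D2s s / q2) / a2 s) by (unfold l2; field; lra).
      assert (0 < (a2 s + P2 s / D2s s) * (D2s s / q2) / a2 s).
      { apply Rdiv_lt_0_compat; [apply Rmult_lt_0_compat|]; try lra. apply Rdiv_lt_0_compat; lra. }
      lra. }
    assert (EQ1 : Qstar_gen s (dr1 s) (a1 s) (P1 s) l1 = Some q1).
    { unfold Qstar_gen. destruct (Req_EM_T l1 1); [lra|]. f_equal. unfold l1.
      field. repeat split; try lra. intro Hz.
      assert (0 < pw s (dr1 s) * (a1 s * pw s (dr1 s) + P1 s * Nr s)) by (apply Rmult_lt_0_compat; nra).
      nra. }
    assert (EQ2 : Qstar_gen s (dr2 s) (a2 s) (P2 s) l2 = Some q2).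
    { unfold Qstar_gen. destruct (Req_EM_T l2 1); [lra|]. f_equal. unfold l2.
      field. repeat split; try lra. intro Hz.
      assert (0 < pw s (dr2 s) * (a2 s * pw s (dr2 s) + P2 s * Nr s)) by (apply Rmult_lt_0_compat; nra).
      nra. }
    rewrite <- EQ1, <- EQ2 in Hf.
    destruct (V1 l1) as [E1 F1]; [lra|]. destruct (V2 l2) as [E3 F3]; [lra|].
    unfold feasible, I1, I2, I3, I4, I5, zeta in Hf. rewrite E1, E3, F1, F3, HL in Hf.
    change (Ccap (x1s s)) with (ln (a1 s)) in Hf. change (Ccap (x2s s)) with (ln (a2 s)) in Hf.
    destruct Hf as [C1 [C2 C3]].
    pose proof (Rle_trans _ _ _ C1 (Rmin_l _ _)) as C1a.
    pose proof (Rle_trans _ _ _ C1 (Rmin_r _ _)) as C1b.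
    pose proof (Rle_trans _ _ _ C2 (Rmin_l _ _)) as C2a.
    pose proof (Rle_trans _ _ _ C2 (Rmin_r _ _)) as C2b.
    destruct (reduce (mu1 s) (a1 s) (P1 s / D1s s) (a2 s) (P2 s / D2s s) (lam_s s) l1 l2 R1 R2)
      as [l [Hl Hle]]; try lra.
    eapply Rle_trans; [exact Hle|].
    rewrite Hst. apply Phi_opt; lra.
  - intros eps Heps. rewrite Eobj, Estar.
    set (f := Phi (mu1 s) (a1 s) (P1 s / D1s s) (a2 s) (P2 s / D2s s) (lam_s s)).
    set (ls := lam_s s) in *. set (ls1 := lam1star s) in *.
    assert (Hc : continuity_pt f ls1).
    { apply derivable_continuous_pt. exists (dPhi (mu1 s) (a1 s) (P1 s / D1s s) (a2 s) (P2 s / D2s s) ls ls1).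
      apply Phi_deriv; lra. }
    unfold continuity_pt, continue_in, limit1_in, limit_in in Hc.
    destruct (Hc eps Heps) as [alp [Halp Hc']].
    simpl in Hc'. unfold R_dist in Hc'.
    set (mid := (1 + ls) / 2).
    set (th := Rmin 1 (alp / (2 * ls))).
    assert (Hap : 0 < alp / (2 * ls)) by (apply Rdiv_lt_0_compat; lra).
    assert (Hth : 0 < th /\ th <= 1 /\ th <= alp / (2 * ls)).
    { unfold th, Rmin; destruct Rle_dec; lra. }
    assert (Hthl : th * ls <= alp / 2).
    { replace (alp / 2) with (alp / (2 * ls) * ls) by (field; lra).
      apply Rmult_le_compat_r; lra. }
    set (l' := ls1 + th * (mid - ls1)).
    assert (Hl' : 1 < l' < ls).
    { unfold l', mid. split; nra. }
    assert (Hd : Rabs (l' - ls1) < alp).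
    { unfold l'. replace (ls1 + th * (mid - ls1) - ls1) with (th * (mid - ls1)) by ring.
      unfold mid in *. apply Rabs_def1; nra. }
    assert (Hclose : f ls1 - eps <= f l').
    { destruct (Req_EM_T l' ls1) as [E|E].
      - rewrite E; lra.
      - assert (Rabs (f l' - f ls1) < eps).
        { apply Hc'. split; [split; [exact I| auto]|exact Hd]. }
        apply Rabs_def2 in H. lra. }
    assert (Hl2 : 1 < ls / l').
    { replace 1 with (l' / l') by (field; lra). unfold Rdiv.
      apply Rmult_lt_compat_r; [apply Rinv_0_lt_compat; lra|lra]. }
    assert (Hl2' : ls / l' <= ls).
    { replace ls with (ls * l' / l') at 2 by (field; lra). unfold Rdiv.
      apply Rmult_le_compat_r; [left; apply Rinv_0_lt_compat; lra|nra]. }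
    set (q1 := (pw s (dr1 s) / Nr s * a1 s + P1 s) / (a1 s * (l' - 1))).
    set (q2 := (pw s (dr2 s) / Nr s * a2 s + P2 s) / (a2 s * (ls / l' - 1))).
    assert (EQ1 : Qstar_gen s (dr1 s) (a1 s) (P1 s) l' = Some q1).
    { unfold Qstar_gen. destruct (Req_EM_T l' 1); [lra|reflexivity]. }
    assert (EQ2 : Qstar_gen s (dr2 s) (a2 s) (P2 s) (ls / l') = Some q2).
    { unfold Qstar_gen. destruct (Req_EM_T (ls / l') 1); [lra|reflexivity]. }
    exists (Ff (a1 s) (P1 s / D1s s) l'), (Ff (a2 s) (P2 s / D2s s) (ls / l')), q1, q2.
    split; [|split; [|split]].
    + unfold q1. apply Rdiv_lt_0_compat; [|apply Rmult_lt_0_compat]; try lra.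
      assert (0 < D1s s * a1 s) by (apply Rmult_lt_0_compat; lra). lra.
    + unfold q2. apply Rdiv_lt_0_compat; [|apply Rmult_lt_0_compat]; try lra.
      assert (0 < D2s s * a2 s) by (apply Rmult_lt_0_compat; lra). lra.
    + rewrite <- EQ1, <- EQ2. apply FP. lra.
    + rewrite Eobj. exact Hclose.
Qed.
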